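(* Fix a positive integer $g$ and constants $\epsilon>0$, $b>0$, $\eta>0$. For each $N$, let $G_N$ be a random graph drawn from an inhomogeneous random graph model on the node set $V=\{1,\dots,N\}$ with edge probabilities $p_{ij}$ ($i\neq j$) satisfying $p_{ij}>(1+\epsilon)/N$ for all $i\neq j$. Suppose that the set $V_p\subset V$ of nodes $i$ such that $p_{ij}<b/N$ for all $j\neq i$ satisfies $|V_p|>\eta N$. Let $D_g(N)$ denote the number of subsets $S\subset V$ that are $g$-dangling in $G_N$. Then $\mathbb{E}[D_g(N)]$ grows proportionally to $N$: there exist constants $c>0$ and $N_0$ (depending on $g,\epsilon,b,\eta$ but not on $N$) such that $cN\le \mathbb{E}[D_g(N)]\le N$ for all $N\ge N_0$.
   Context: An inhomogeneous random graph model on $N$ nodes is a random undirected graph without self-loops in which each pair $\{i,j\}$, $i\neq j$, is an edge independently with probability $p_{ij}$. In an unweighted graph $G=(V,E)$, a subset $S\subset V$ is called $g$-dangling if: (i) $|S|=g$; (ii) the node-induced subgraph on $S$ has exactly $g-1$ edges and contains no cycle (i.e., it is a tree); (iii) there is exactly one edge of $G$ with one endpoint in $S$ and the other in $V\setminus S$. *)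

(* Defs.v *)
From HB Require Import structures.
From mathcomp Require Import all_boot all_order all_algebra.
Set Implicit Arguments. Unset Strict Implicit. Unset Printing Implicit Defensive.
Import Order.TTheory GRing.Theory Num.Theory.

(* A simple undirected graph on the node set 'I_N (nodes 1..N, 0-indexed)
   is encoded by its edge set E of ordered pairs (i,j) with i < j
   (one representative per unordered pair {i,j}). *)
Definition upper_pairs (N : nat) : {set 'I_N * 'I_N} :=
  [set ij : 'I_N * 'I_N | (ij.1 < ij.2)%N].

Definition is_graph (N : nat) (E : {set 'I_N * 'I_N}) : bool :=
  E \subset upper_pairs N.

Definition adj (N : nat) (E : {set 'I_N * 'I_N}) : rel 'I_N :=
  fun i j => ((i, j) \in E) || ((j, i) \in E).

Definition n_inner_edges (N : nat) (E : {set 'I_N * 'I_N}) (S : {set 'I_N}) : nat :=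
  #|[set ij in E | (ij.1 \in S) && (ij.2 \in S)]|.

Definition n_boundary_edges (N : nat) (E : {set 'I_N * 'I_N}) (S : {set 'I_N}) : nat :=
  #|[set ij in E | (ij.1 \in S) != (ij.2 \in S)]|.

(* A duplicate-free sequence of nodes has length <= N, so bounding k by N
   loses nothing. *)
Definition induced_acyclic (N : nat) (E : {set 'I_N * 'I_N}) (S : {set 'I_N}) : bool :=
  [forall k : 'I_N.+1, forall t : k.-tuple 'I_N,
     ~~ [&& (3 <= k)%N, uniq t, all (fun x => x \in S) t & cycle (adj E) t]].

Definition dangling (N g : nat) (E : {set 'I_N * 'I_N}) (S : {set 'I_N}) : bool :=
  [&& #|S| == g, n_inner_edges E S == g.-1, induced_acyclic E S
    & n_boundary_edges E S == 1%N].

Definition num_dangling (N g : nat) (E : {set 'I_N * 'I_N}) : nat :=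
  #|[set S : {set 'I_N} | dangling g E S]|.

Local Open Scope ring_scope.

(* probability of the graph E in the inhomogeneous random graph model with
   edge probabilities p (each pair {i,j}, i<j, independently an edge w.p. p i j) *)
Definition graph_prob (R : pzRingType) (N : nat) (p : 'I_N -> 'I_N -> R)
    (E : {set 'I_N * 'I_N}) : R :=
  \prod_(ij in upper_pairs N)
     (if ij \in E then p ij.1 ij.2 else 1 - p ij.1 ij.2).

Definition expected_dangling (R : pzRingType) (N g : nat) (p : 'I_N -> 'I_N -> R) : R :=
  \sum_(E : {set 'I_N * 'I_N} | is_graph E) graph_prob p E * (num_dangling g E)%:R.

Definition Vp (R : numFieldType) (N : nat) (b : R) (p : 'I_N -> 'I_N -> R) : {set 'I_N} :=
  [set i | [forall j, (j != i) ==> (p i j < b / N%:R)]].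

(* Main.v *)
Require Import Defs.
From HB Require Import structures.
From mathcomp Require Import all_boot all_order all_algebra.
From mathcomp Require Import zify.
Set Implicit Arguments. Unset Strict Implicit. Unset Printing Implicit Defensive.
Import Order.TTheory GRing.Theory Num.Theory.
From mathcomp Require Import ring lra.
Section Graph.
Variables (N : nat) (E : {set 'I_N * 'I_N}).
Hypothesis HE : is_graph E.

Lemma edge_lt ij : ij \in E -> (ij.1 < ij.2)%N.
Proof. move=> h; have := subsetP HE _ h; by rewrite inE. Qed.

Lemma adj_sym : symmetric (adj E).
Proof. move=> x y; by rewrite /adj orbC. Qed.

Lemma adj_irr x : adj E x x = false.
Proof. rewrite /adj orbb; apply/negP => /edge_lt /=; by rewrite ltnn. Qed.

Lemma uniq_size_le (s : seq 'I_N) : uniq s -> (size s <= N)%N.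
Proof. move/card_uniqP <-; by rewrite -[X in (_ <= X)%N]card_ord max_card. Qed.

Lemma no_cycle S (t : seq 'I_N) : induced_acyclic E S ->
  (3 <= size t)%N -> uniq t -> all (fun x => x \in S) t -> cycle (adj E) t -> False.
Proof.
move=> /forallP Hac h3 hu ha hc.
have hle : (size t < N.+1)%N by rewrite ltnS uniq_size_le.
have /forallP := Hac (Ordinal hle) => /(_ (@Tuple _ _ t (eqxx _))) /=.
by rewrite h3 hu ha hc.
Qed.

Lemma deg2_false S (B : {set 'I_N}) : induced_acyclic E S -> B \subset S -> B != set0 ->
  (forall x, x \in B -> exists y1 y2, [/\ y1 \in B, y2 \in B, y1 != y2, adj E x y1 & adj E x y2]) ->
  False.
Proof.
move=> Hac sBS /set0Pn [x0 x0B] Hd.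
suff H : forall n, exists x (s : seq 'I_N), [/\ size s = n, uniq (x :: s),
     all (fun z => z \in B) (x :: s) & path (adj E) x s].
  have [x [s [hs hu _ _]]] := H N.
  by have := uniq_size_le hu; rewrite /= hs ltnn.
elim=> [|n [x [s [hs hu ha hp]]]].
  by exists x0, [::]; rewrite /= x0B.
have xB : x \in B by move: ha => /= /andP [].
have [y1 [y2 [y1B y2B ny hy1 hy2]]] := Hd x xB.
have [y [yB hy hyh]] : exists y, [/\ y \in B, adj E x y & forall z s', s = z :: s' -> y != z].
  case: s hs hu ha hp => [|z s'] hs hu ha hp.
    by exists y1; split => // z s'.
  case: (eqVneq y1 z) => [e1|n1].
    exists y2; split => // z' s'' [<- _]; by rewrite -e1 eq_sym.
  exists y1; split => // z' s'' [<- _]; exact n1.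
case: (boolP (y \in x :: s)) => yin.
  exfalso.
  have yx : y != x by apply/negP => /eqP e; move: hy; rewrite e adj_irr.
  have ys : y \in s by move: yin; rewrite inE (negbTE yx).
  case/splitPr: ys hs hu ha hp hyh => s1 s2 hs hu ha hp hyh.
  have e : x :: s1 ++ y :: s2 = (x :: rcons s1 y) ++ s2 by rewrite /= -cats1 -catA.
  apply: (@no_cycle S (x :: rcons s1 y) Hac).
  - clear e; case: s1 hs hu ha hp hyh => [|z s1] //= _ _ _ _ hyh.
      by have := hyh y s2 erefl; rewrite eqxx.
    by rewrite size_rcons.
  - by move: hu; rewrite e cat_uniq => /andP [].
  - apply/allP => z hz.
    have zB : z \in B by move/allP: ha; apply; rewrite e mem_cat hz.
    exact: (subsetP sBS).
  - rewrite /= rcons_path last_rcons adj_sym hy andbT.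
    by move: hp; rewrite -cats1 !cat_path /= andbT => /andP [-> /andP [-> _]].
exists y, (x :: s); split.
- by rewrite /= hs.
- by rewrite cons_uniq yin hu.
- by rewrite /= yB; move: ha => /= ->.
- by rewrite /= adj_sym hy hp.
Qed.

End Graph.
Section Forest.
Variables (N : nat) (E : {set 'I_N * 'I_N}).
Hypothesis HE : is_graph E.

Lemma forest_bound S (B : {set 'I_N}) : induced_acyclic E S -> B \subset S -> B != set0 ->
  (n_inner_edges E B < #|B|)%N.
Proof.
move=> Hac.
move: {2}#|B| (leqnn #|B|) => n; elim: n B => [|n IH] B hn sBS B0.
  by move: B0; rewrite -card_gt0; case: #|B| hn.
case: (boolP [exists x in B, [forall y1 in B, [forall y2 in B,
     (adj E x y1 && adj E x y2) ==> (y1 == y2)]]]); last first.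
  move/exists_inPn => H; exfalso; apply: (deg2_false HE Hac sBS B0) => x xB.
  have /forall_inPn [y1 y1B] := H x xB.
  move/forall_inPn => [y2 y2B]; rewrite negb_imply => /andP [/andP [h1 h2] ny].
  by exists y1, y2.
case/exists_inP => x xB /forall_inP Hx.
have HxE : forall ij : 'I_N * 'I_N, (ij.1 == x) || (ij.2 == x) ->
   ij = (x, if ij.1 == x then ij.2 else ij.1) \/ ij = (if ij.1 == x then ij.2 else ij.1, x).
  move=> [a c] /=; case: eqP => [->|_]; first by left.
  by rewrite /= => /eqP ->; right.
have adjy : forall uv, uv \in E -> (uv.1 == x) || (uv.2 == x) ->
    adj E x (if uv.1 == x then uv.2 else uv.1).
  move=> [a c] /= uvE; rewrite /adj; case: (eqVneq a x) => [e|ne] /=.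
    by move=> _; rewrite -e uvE.
  by move/eqP => e; rewrite -e uvE orbT.
set Ex := [set ij in E | [&& ij.1 \in B, ij.2 \in B & (ij.1 == x) || (ij.2 == x)]].
have cEx : (#|Ex| <= 1)%N.
  apply/card_le1_eqP => ij kl; rewrite !inE => /and4P [ijE ij1 ij2 ijx] /and4P [klE kl1 kl2 klx].
  set y := (if ij.1 == x then ij.2 else ij.1).
  set y' := (if kl.1 == x then kl.2 else kl.1).
  have yB : y \in B by rewrite /y; case: ifP.
  have y'B : y' \in B by rewrite /y'; case: ifP.
  have eyy : y = y'.
    apply/eqP; have := Hx y yB => /forall_inP /(_ y' y'B).
    by rewrite adjy // adjy.
  have ltij := edge_lt HE ijE; have ltkl := edge_lt HE klE.
  have e1 := HxE ij ijx; have e2 := HxE kl klx.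
  rewrite -/y in e1; rewrite -/y' in e2.
  clearbody y y'; subst y'.
  case: e1 => e1; case: e2 => e2; rewrite e1 e2 /= in ltij ltkl *; try by [].
    by exfalso; move: (ltn_trans ltij ltkl); rewrite ltnn.
  by exfalso; move: (ltn_trans ltij ltkl); rewrite ltnn.
case: (eqVneq (B :\ x) set0) => Bx0.
  suff -> : n_inner_edges E B = 0%N by rewrite card_gt0.
  apply/eqP; rewrite cards_eq0; apply/eqP/setP => ij; rewrite !inE.
  apply/negP => /and3P [ijE h1 h2].
  have hb : forall z, z \in B -> z = x.
    move=> z zB; apply/eqP; case: (eqVneq z x) => // nz.
    have : z \in B :\ x by rewrite !inE nz zB.
    by rewrite Bx0 in_set0.
  have := edge_lt HE ijE; by rewrite (hb _ h1) (hb _ h2) ltnn.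
have hcard : #|B| = (#|B :\ x|).+1 by rewrite (cardsD1 x B) xB.
have IH' := IH (B :\ x).
have : (n_inner_edges E (B :\ x) < #|B :\ x|)%N.
  apply: IH' => //; first by move: hn; rewrite hcard.
  by apply: subset_trans sBS; apply: subD1set.
have : (n_inner_edges E B <= n_inner_edges E (B :\ x) + #|Ex|)%N.
  rewrite /n_inner_edges; apply: leq_trans (leq_card_setU _ _).
  apply: subset_leq_card; apply/subsetP => ij; rewrite !inE => /and3P [ijE h1 h2].
  case: (eqVneq ij.1 x) => [e1|n1]; first by rewrite ijE h1 h2 orbT.
  case: (eqVneq ij.2 x) => [e2|n2]; first by rewrite ijE h1 h2 !orbT.
  by rewrite ijE h1 h2.
rewrite hcard; lia.
Qed.

End Forest.
Section Count.
Variables (N g : nat) (E : {set 'I_N * 'I_N}).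
Hypothesis HE : is_graph E.

Lemma dang_card S : dangling g E S -> #|S| = g.
Proof. by case/and4P => /eqP. Qed.

Lemma conn S (A : {set 'I_N}) : dangling g E S -> A \subset S -> A != set0 -> S :\: A != set0 ->
  exists x y, [/\ x \in A, y \in S :\: A & adj E x y].
Proof.
move=> hd sAS A0 SA0; case/and4P: hd => /eqP hS /eqP hin hac _.
case: (boolP [exists x in A, exists y in S :\: A, adj E x y]).
  by case/exists_inP => x xA /exists_inP [y yA hxy]; exists x, y.
move/exists_inPn => H; exfalso.
have h1 := forest_bound HE hac sAS A0.
have h2 := forest_bound HE hac (subsetDl S A) SA0.
have hc : #|S| = (#|A| + #|S :\: A|)%N.
  by rewrite -(cardsID A S) (setIidPr sAS) addnC.
have : (n_inner_edges E S <= n_inner_edges E A + n_inner_edges E (S :\: A))%N.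
  rewrite /n_inner_edges; apply: leq_trans (leq_card_setU _ _).
  apply: subset_leq_card; apply/subsetP => ij; rewrite !inE => /and3P [ijE h1S h2S].
  rewrite ijE h1S h2S /=.
  case: (boolP (ij.1 \in A)) => a1; case: (boolP (ij.2 \in A)) => a2 //=.
  - exfalso; have /exists_inPn := H _ a1 => /(_ ij.2); rewrite !inE a2 h2S /adj.
    by case: ij ijE {h1S h2S a1 a2} => a b /= ->; rewrite /= => /(_ isT).
  - exfalso; have /exists_inPn := H _ a2 => /(_ ij.1); rewrite !inE a1 h1S /adj.
    by case: ij ijE {h1S h2S a1 a2} => a b /= ->; rewrite /= orbT => /(_ isT).
move: hin hS hc h1 h2; lia.
Qed.

Lemma bd_uniq S x y x' y' : dangling g E S ->
  x \in S -> y \notin S -> adj E x y -> x' \in S -> y' \notin S -> adj E x' y' ->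
  x = x' /\ y = y'.
Proof.
case/and4P => _ _ _ /eqP hb xS yS hxy x'S y'S hxy'.
have /card_le1_eqP Hb : (#|[set ij in E | (ij.1 \in S) != (ij.2 \in S)]| <= 1)%N
  by rewrite -/(n_boundary_edges E S) hb.
have mem : forall a c, a \in S -> c \notin S -> adj E a c ->
    ((a, c) \in [set ij in E | (ij.1 \in S) != (ij.2 \in S)]) \/
    ((c, a) \in [set ij in E | (ij.1 \in S) != (ij.2 \in S)]).
  move=> a c aS cS; rewrite /adj !inE /= aS (negbTE cS) /=.
  by case/orP => ->; [left|right].
case: (mem _ _ xS yS hxy) => h; case: (mem _ _ x'S y'S hxy') => h';
  case: (Hb _ _ h h') => e1 e2; subst => //;
  first [ by rewrite (negbTE yS) in x'S | by rewrite (negbTE y'S) in xS ].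
Qed.

Lemma pair_lemma S T w : dangling g E S -> dangling g E T -> S != T -> w \in S -> w \in T ->
  exists x y, [/\ x \in S, x \in T, y \in T, y \notin S & adj E x y].
Proof.
move=> hS hT nST wS wT.
have [||x [y [xA yA hxy]]] := @conn T (S :&: T) hT (subsetIr S T).
- by apply/set0Pn; exists w; rewrite inE wS wT.
- apply/set0Pn; case: (boolP (T \subset S)) => sTS.
    exfalso; move/negP: nST; apply; rewrite eq_sym eqEcard sTS /=.
    by rewrite (dang_card hS) (dang_card hT) leqnn.
  case/subsetPn: sTS => z zT zS; exists z; by rewrite !inE zT (negbTE zS).
- move: xA yA; rewrite !inE => /andP [xS xT] /andP [ny yT].
  exists x, y; split => //; by move: ny; rewrite yT andbT.
Qed.

Definition outnb (S : {set 'I_N}) := [set y | (y \notin S) && [exists x in S, adj E x y]].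
Definition innb (S : {set 'I_N}) := [set x in S | [exists y, (y \notin S) && adj E x y]].

Lemma node_bound w : #|[set S | dangling g E S & w \in S]| <= g.
Proof.
set F := [set S | _ & _].
case: (set_0Vmem F) => [->|[S1 S1F]]; first by rewrite cards0.
move: (S1F); rewrite inE => /andP [hS1 wS1].
pose f S := if S == S1 then odflt w [pick x in innb S1] else odflt w [pick y in outnb S].
have headP : forall S, S \in F -> S != S1 -> f S \in S1 /\ f S \notin S.
  move=> S; rewrite inE => /andP [hS wS] nS; rewrite /f (negbTE nS).
  have [x [y [xS xS1 yS1 yS hxy]]] := pair_lemma hS hS1 nS wS wS1.
  case: pickP => [z|]; last first.
    move=> /(_ y); rewrite !inE yS /= => /negbT /exists_inPn /(_ x xS).
    by rewrite hxy.
  rewrite !inE => /andP [zS /exists_inP [x' x'S hz]] /=.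
  have [_ ->] := bd_uniq hS x'S zS hz xS yS hxy; by [].
have tailP : forall S, S \in F -> S != S1 -> f S1 \in S.
  move=> S; rewrite inE => /andP [hS wS] nS; rewrite /f eqxx.
  have nS' : S1 != S by rewrite eq_sym.
  have [x [y [xS1 xS yS yS1 hxy]]] := pair_lemma hS1 hS nS' wS1 wS.
  case: pickP => [z|]; last first.
    move=> /(_ x); rewrite !inE xS1 /= => /negbT /existsPn /(_ y).
    by rewrite yS1 hxy.
  rewrite !inE => /andP [zS1 /existsP [y' /andP [y'S hz]]] /=.
  by have [-> _] := bd_uniq hS1 zS1 y'S hz xS1 yS1 hxy.
have f1 : f S1 \in S1.
  rewrite /f eqxx; case: pickP => [z|] //=; by rewrite inE => /andP [].
have finj : {in F &, injective f}.
  move=> S T SF TF efg.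
  case: (eqVneq S S1) => [eS|nS]; case: (eqVneq T S1) => [eT|nT].
  - by rewrite eS eT.
  - have := tailP T TF nT; have := headP T TF nT; rewrite -efg eS => - [_ h1] h2.
    by rewrite h2 in h1.
  - have := tailP S SF nS; have := headP S SF nS; rewrite efg eT => - [_ h1] h2.
    by rewrite h2 in h1.
  - apply/eqP; apply/negP => /negP nST.
    move: (SF) (TF); rewrite !inE => /andP [hS wS] /andP [hT wT].
    have [x [y [xS xT yT yS hxy]]] := pair_lemma hS hT nST wS wT.
    have [_ hT'] := headP T TF nT.
    suff : f S = y by move=> e; rewrite -efg e yT in hT'.
    rewrite /f (negbTE nS); case: pickP => [z|]; last first.
      move=> /(_ y); rewrite !inE yS /= => /negbT /exists_inPn /(_ x xS).
      by rewrite hxy.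
    rewrite !inE => /andP [zS /exists_inP [x' x'S hz]] /=.
    by have [_ ->] := bd_uniq hS x'S zS hz xS yS hxy.
rewrite -(card_in_imset finj) -(dang_card hS1); apply: subset_leq_card.
apply/subsetP => z /imsetP [S SF ->].
case: (eqVneq S S1) => [->|nS] //; by case: (headP S SF nS).
Qed.

Lemma count_le : (0 < g)%N -> (num_dangling g E <= N)%N.
Proof.
move=> g0; rewrite /num_dangling; set D := [set S | dangling g E S].
rewrite -(leq_pmul2l g0).
have h1 : (\sum_(S in D) #|S| = #|D| * g)%N.
  rewrite -sum_nat_const; apply: eq_bigr => S; rewrite inE; exact: dang_card.
have h2 : (\sum_(S in D) #|S| = \sum_(w : 'I_N) #|[set S | dangling g E S & w \in S]|)%N.
  transitivity (\sum_(S in D) \sum_(w : 'I_N) (w \in S : nat))%N.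
    apply: eq_bigr => S _; rewrite -sum1_card big_mkcond /=.
    by apply: eq_bigr => w _; case: (w \in S).
  rewrite exchange_big /=; apply: eq_bigr => w _.
  rewrite -sum1_card big_mkcond /= [RHS]big_mkcond /=.
  apply: eq_bigr => S _; rewrite !inE; by case: (dangling g E S); case: (w \in S).
have h3 : (\sum_(w : 'I_N) #|[set S | dangling g E S & w \in S]| <= \sum_(w : 'I_N) g)%N.
  apply: leq_sum => w _; exact: node_bound.
move: h3; rewrite -h2 h1 sum_nat_const card_ord mulnC [(N * g)%N]mulnC; exact.
Qed.

End Count.
Section Marg.
Local Open Scope ring_scope.
Variable R : comPzRingType.

Lemma prod_bool (I : finType) (P : pred I) (c : I -> bool) :
  \prod_(i | P i) (c i)%:R = ([forall i, P i ==> c i])%:R :> R.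
Proof.
case: (boolP [forall i, P i ==> c i]) => H.
  rewrite big1 // => i Pi; by move/forallP: H => /(_ i); rewrite Pi /= => ->.
move/forallPn: H => [i]; rewrite negb_imply => /andP [Pi ci].
by rewrite (bigD1 i) //= (negbTE ci) mul0r.
Qed.

Lemma sum_sets (T : finType) (h : T -> bool -> R) :
  \sum_(E : {set T}) \prod_(u : T) h u (u \in E) = \prod_(u : T) (h u true + h u false).
Proof.
transitivity (\prod_(u : T) \sum_(b : bool) h u b); last first.
  by apply: eq_bigr => u _; rewrite big_bool.
rewrite bigA_distr_bigA /=.
rewrite (reindex (fun E : {set T} => [ffun u => u \in E])) /=; last first.
  apply: onW_bij; exists (fun f : {ffun T -> bool} => [set u | f u]).
    by move=> E; apply/setP => u; rewrite inE ffunE.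
  by move=> f; apply/ffunP => u; rewrite ffunE inE.
by apply: eq_bigr => E _; apply: eq_bigr => u _; rewrite ffunE.
Qed.

Lemma marg N (p : 'I_N -> 'I_N -> R) (F A : {set 'I_N * 'I_N}) :
  A \subset F :&: upper_pairs N ->
  \sum_(E | is_graph E && (E :&: F == A)) graph_prob p E =
  \prod_(u in upper_pairs N)
     (if u \in F then (if u \in A then p u.1 u.2 else 1 - p u.1 u.2) else 1).
Proof.
move=> sA.
set U := upper_pairs N.
pose w (u : 'I_N * 'I_N) (b : bool) := if b then p u.1 u.2 else 1 - p u.1 u.2.
pose h u b := (if u \in U then w u b else (b == false)%:R) *
              ((u \in F) ==> (b == (u \in A)))%:R.
transitivity (\sum_(E : {set 'I_N * 'I_N}) \prod_(u : 'I_N * 'I_N) h u (u \in E)).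
  rewrite big_mkcond /=; apply: eq_bigr => E _.
  rewrite big_split /= (bigID (mem U)) /= prod_bool.
  have -> : \prod_(i | i \in U) (if i \in U then w i (i \in E) else ((i \in E) == false)%:R)
       = graph_prob p E by apply: eq_bigr => i ->.
  have -> : \prod_(i | i \notin U) (if i \in U then w i (i \in E) else ((i \in E) == false)%:R)
       = ([forall i, (i \notin U) ==> ((i \in E) == false)])%:R.
    rewrite -prod_bool; apply: eq_bigr => i /negbTE ->; by [].
  have e1 : is_graph E = [forall i, (i \notin U) ==> ((i \in E) == false)].
    apply/subsetP/forallP => [H i|H i iE].
      apply/implyP => iU; rewrite eqbF_neg; apply/negP => iE; by move: iU; rewrite (H i iE).
    by move: (H i); rewrite iE /=; case: (i \in U).
  have e2 : (E :&: F == A) = [forall i, (i \in F) ==> ((i \in E) == (i \in A))].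
    apply/eqP/forallP => [<- i|H].
      by rewrite inE; apply/implyP => ->; rewrite andbT.
    apply/setP => i; rewrite inE; move: (H i).
    case: (boolP (i \in F)) => iF /=; first by rewrite andbT => /eqP.
    rewrite andbF => _; apply/esym/negbTE/negP => iA.
    by move/subsetP: sA => /(_ i iA); rewrite inE (negbTE iF).
  rewrite -e1 -e2; case: (is_graph E); case: (E :&: F == A); by rewrite ?mulr1 ?mulr0.
rewrite sum_sets [RHS]big_mkcond /=; apply: eq_bigr => u _.
rewrite /h /w; case: (boolP (u \in U)) => uU /=.
  case: (boolP (u \in F)) => uF /=; last by rewrite !mulr1 addrC subrK.
  by case: (u \in A); rewrite /= ?mulr1 ?mulr0 ?addr0 ?add0r.
have uA : u \in A = false.
  apply/negP => uA; by move/subsetP: sA => /(_ u uA); rewrite inE (negbTE uU) andbF.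
by rewrite uA mul0r add0r mul1r eqxx implybT.
Qed.

End Marg.
Definition pr N (x y : 'I_N) : 'I_N * 'I_N := if (x < y)%N then (x, y) else (y, x).
Definition touch N (S : {set 'I_N}) : {set 'I_N * 'I_N} :=
  [set ij | (ij.1 \in S) || (ij.2 \in S)].
Definition starA N (S : {set 'I_N}) (c v : 'I_N) : {set 'I_N * 'I_N} :=
  [set pr c y | y in (v |: S) :\ c].

Section Star.
Variables (N g : nat) (E : {set 'I_N * 'I_N}) (S : {set 'I_N}) (c v : 'I_N).
Hypotheses (HE : is_graph E) (cS : c \in S) (vS : v \notin S) (hSg : #|S| = g).

Definition oth (ij : 'I_N * 'I_N) := if ij.1 == c then ij.2 else ij.1.

Lemma oth_pr y : y != c -> oth (pr c y) = y.
Proof.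
move=> yc; rewrite /oth /pr; case: ltnP => _ /=; first by rewrite eqxx.
by rewrite (negbTE yc).
Qed.

Lemma pr_ends y : ((pr c y).1 == c) && ((pr c y).2 == y) || ((pr c y).1 == y) && ((pr c y).2 == c).
Proof. by rewrite /pr; case: ltnP => _ /=; rewrite !eqxx ?orbT. Qed.

Lemma starA_sub : starA S c v \subset touch S :&: upper_pairs N.
Proof.
apply/subsetP => ij /imsetP [y]; rewrite !inE => /andP [yc _] ->.
rewrite /pr; case: ltnP => h /=; rewrite cS ?orbT /= //.
rewrite ltn_neqAle h andbT; apply/negP => /eqP e.
by move/negP: yc; apply; apply/eqP; apply: val_inj.
Qed.

Hypothesis Hev : E :&: touch S == starA S c v.

Lemma hEF ij : ij \in touch S -> (ij \in E) = (ij \in starA S c v).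
Proof. by move=> h; rewrite -(eqP Hev) inE h andbT. Qed.

Lemma inA ij : ij \in starA S c v -> exists2 y, y \in (v |: S) :\ c & ij = pr c y.
Proof. by case/imsetP => y yin ->; exists y. Qed.

Lemma star_adj a b : a \in S -> adj E a b -> (a == c) || (b == c).
Proof.
move=> aS; rewrite /adj => /orP [] h.
- have := h; rewrite hEF ?inE ?aS // => /inA [y _ e].
  by have := pr_ends y; rewrite -e /= => /orP [/andP [-> _]|/andP [_ ->]]; rewrite ?orbT.
- have := h; rewrite hEF ?inE ?aS ?orbT // => /inA [y _ e].
  by have := pr_ends y; rewrite -e /= => /orP [/andP [-> _]|/andP [_ ->]]; rewrite ?orbT.
Qed.

Lemma vc : v != c.
Proof. by apply/negP => /eqP e; move: vS; rewrite e cS. Qed.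

Lemma ends_in ij y : ij = pr c y -> ((ij.1 \in S) && (ij.2 \in S)) = (y \in S).
Proof.
move=> ->; have := pr_ends y.
by case/orP => /andP [/eqP -> /eqP ->]; rewrite cS ?andbT.
Qed.

Lemma ends_in2 ij y : ij = pr c y -> (ij.1 \in S) != (ij.2 \in S) = (y \notin S).
Proof.
move=> ->; have := pr_ends y.
by case/orP => /andP [/eqP -> /eqP ->]; rewrite cS //; case: (y \in S).
Qed.

Lemma star_dangling : dangling g E S.
Proof.
apply/and4P; split.
- by rewrite hSg.
- rewrite /n_inner_edges.
  have -> : [set ij in E | (ij.1 \in S) && (ij.2 \in S)] = pr c @: (S :\ c).
    apply/setP => ij; rewrite inE; apply/idP/idP.
    + case/andP => ijE /andP [h1 h2].
      move: ijE; rewrite hEF ?inE ?h1 // => /inA [y yin e].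
      have yS : y \in S by rewrite -(ends_in e) h1 h2.
      move: yin; rewrite !inE => /andP [yc _].
      by apply/imsetP; exists y; rewrite // !inE yc yS.
    + case/imsetP => y; rewrite !inE => /andP [yc yS] e.
      have hb : (ij.1 \in S) && (ij.2 \in S) by rewrite (ends_in e).
      rewrite hb andbT hEF; last by rewrite inE; case/andP: hb => ->.
      by rewrite e; apply/imsetP; exists y; rewrite // !inE yc yS orbT.
  rewrite card_in_imset; last first.
    move=> y y'; rewrite !inE => /andP [yc _] /andP [y'c _] e.
    by rewrite -(oth_pr yc) e oth_pr.
  by rewrite -hSg (cardsD1 c S) cS.
- apply/forallP => k; apply/forallP => t; apply/negP => /and4P [h3 hu ha hc].
  move: h3 hu ha hc; case: t => s /= /eqP <-.
  case: s => [|x0 [|x1 [|x2 r]]] //= _.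
  move=> /and4P [n0 n1 _ _].
  move: n0 n1; rewrite !inE !negb_or => /and3P [n01 n02 n0r] /andP [n12 n1r].
  move=> /and4P [x0S x1S x2S /allP rS].
  move=> /and3P [a01 a12]; rewrite rcons_path => /andP [_ al0].
  set l := last x2 r in al0.
  have lin : l \in x2 :: r by rewrite /l mem_last.
  have lS : l \in S by move: lin; rewrite inE => /orP [/eqP ->|/rS].
  have n1l : x1 != l by apply/negP => /eqP e; move: lin; rewrite -e inE (negbTE n12) (negbTE n1r).
  have := star_adj x0S a01; have := star_adj x1S a12; have := star_adj lS al0.
  case: (eqVneq x1 c) => [e1|ne1] /=.
    move=> /orP [/eqP el|/eqP e0] _ _.
      by move/eqP: n1l; apply; rewrite e1 el.
    by move/eqP: n01; apply; rewrite e1 e0.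
  rewrite ?orbF => _ /eqP e2 /eqP e0; by move/eqP: n02; apply; rewrite e0 e2.
- rewrite /n_boundary_edges.
  have -> : [set ij in E | (ij.1 \in S) != (ij.2 \in S)] = [set pr c v].
    apply/setP => ij; rewrite !inE; apply/idP/idP.
    + case/andP => ijE hb.
      have ht : ij \in touch S by rewrite inE; move: hb; case: (ij.1 \in S); case: (ij.2 \in S).
      move: ijE; rewrite hEF // => /inA [y yin e].
      move: yin; rewrite !inE => /andP [_ /orP [/eqP ey|yS]]; first by rewrite e ey.
      by move: hb; rewrite (ends_in2 e) yS.
    + move/eqP => e.
      have ht : ij \in touch S by rewrite e inE; have := pr_ends v; case/orP => /andP [/eqP -> /eqP ->]; rewrite cS ?orbT.
      rewrite hEF // (ends_in2 e) vS andbT e.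
      by apply/imsetP; exists v; rewrite // !inE vc eqxx.
  by rewrite cards1.
Qed.

End Star.
Section Events.
Variables (N g : nat) (E : {set 'I_N * 'I_N}) (Vset : {set 'I_N}) (cf : {set 'I_N} -> 'I_N).
Hypotheses (HE : is_graph E) (Hcf : forall S : {set 'I_N}, #|S| = g -> cf S \in S).

Definition evset (S : {set 'I_N}) :=
  [set v | (v \notin S) && (E :&: touch S == starA S (cf S) v)].

Lemma ev_card (S : {set 'I_N}) : #|S| = g -> (#|evset S| <= dangling g E S)%N.
Proof.
move=> hS; have cS := Hcf hS.
case: (set_0Vmem (evset S)) => [->|[v]]; first by rewrite cards0.
rewrite inE => /andP [vS hv].
rewrite (star_dangling cS vS hS hv).
apply/card_le1_eqP => v1 v2; rewrite !inE => /andP [v1S h1] /andP [v2S h2].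
have eA : starA S (cf S) v1 = starA S (cf S) v2 by rewrite -(eqP h1) -(eqP h2).
have : pr (cf S) v1 \in starA S (cf S) v2.
  rewrite -eA; apply/imsetP; exists v1 => //; rewrite !inE eqxx andbT.
  by apply/negP => /eqP e; move: v1S; rewrite e cS.
case/imsetP => y; rewrite !inE => /andP [yc yin] e.
have v1c : v1 != cf S by apply/negP => /eqP e'; move: v1S; rewrite e' cS.
have ey : v1 = y by rewrite -(oth_pr v1c) e oth_pr.
move: yin; rewrite -ey (negbTE v1S) orbF => /eqP ->; by [].
Qed.

Definition kS := [set S : {set 'I_N} | (S \subset Vset) && (#|S| == g)].

Lemma sum_ev : (\sum_(S in kS) #|evset S| <= num_dangling g E)%N.
Proof.
apply: (@leq_trans (\sum_(S in kS) (dangling g E S : nat))).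
  apply: leq_sum => S; rewrite inE => /andP [_ /eqP hS]; exact: ev_card.
rewrite /num_dangling -sum1_card.
apply: (@leq_trans (\sum_(S in [set S | dangling g E S]) (S \in kS : nat))).
  rewrite big_mkcond [X in (_ <= X)%N]big_mkcond /=; apply: leq_sum => S _.
  by case: (S \in kS); rewrite ?inE; case: (dangling g E S).
apply: leq_sum => S _; by case: (S \in kS).
Qed.

End Events.
Lemma ffact_lb m k : ((m - k) ^ k <= m ^_ k)%N.
Proof.
elim: k m => [|k IH] m; first by rewrite expn0 ffactn0.
rewrite ffactnS expnS; apply: leq_mul; first exact: leq_subr.
by apply: leq_trans (IH m.-1); have -> : (m - k.+1 = m.-1 - k)%N by lia.
Qed.

Section Real.
Local Open Scope ring_scope.
Variable R : realFieldType.

Lemma bernoulli (x : R) n : 0 <= x -> x <= 1 -> 1 - n%:R * x <= (1 - x) ^+ n.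
Proof.
move=> x0 x1; elim: n => [|n IH]; first by rewrite mul0r subr0 expr0.
rewrite exprS -natr1.
have h0 : 0 <= 1 - x by lra.
apply: (@le_trans _ _ ((1 - x) * (1 - n%:R * x))); last by apply: ler_wpM2l.
have hn : 0 <= n%:R :> R by apply: ler0n.
nra.
Qed.

Lemma pow_block (b : R) (K N g : nat) : 0 < b -> b <= K%:R -> (0 < K)%N -> (4 * K <= N)%N ->
  (1/4) ^+ (4 * K * g) <= (1 - b / N%:R) ^+ (2 * g * N).
Proof.
move=> b0 bK K0 NK.
have N0 : (0 < N)%N by lia.
have N0r : 0 < N%:R :> R by rewrite ltr0n.
set q := 1 - b / N%:R.
have bN : b / N%:R <= 1/4.
  rewrite ler_pdivrMr // ; apply: (le_trans bK).
  have : (4 * K)%:R <= N%:R :> R by rewrite ler_nat.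
  rewrite natrM; lra.
have bN0 : 0 <= b / N%:R by apply: divr_ge0; lra.
have q0 : 0 <= q by rewrite /q; lra.
have q1 : q <= 1 by rewrite /q; lra.
set n1 := (N %/ (2 * K))%N.+1.
have hn1 : (N <= 2 * K * n1)%N.
  have e := divn_eq N (2 * K); have hr : (N %% (2 * K) < 2 * K)%N by rewrite ltn_pmod // muln_gt0.
  rewrite /n1; move: e hr; move: (N %/ (2 * K))%N (N %% (2 * K))%N => a r e hr; nia.
have hn2 : (4 * K * n1 <= 3 * N)%N.
  have e := divn_eq N (2 * K).
  rewrite /n1; move: e; move: (N %/ (2 * K))%N (N %% (2 * K))%N => a r e; nia.
have hq1 : 1/4 <= q ^+ n1.
  apply: le_trans (bernoulli n1 bN0 (le_trans bN _)); last by lra.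
  have : (4 * K * n1)%:R <= (3 * N)%:R :> R by rewrite ler_nat.
  rewrite !natrM => h.
  have : n1%:R * (b / N%:R) <= 3/4.
    rewrite mulrA ler_pdivrMr //.
    have hn1r : 0 <= n1%:R :> R by apply: ler0n.
    have : n1%:R * b <= n1%:R * K%:R by apply: ler_wpM2l.
    lra.
  lra.
apply: (@le_trans _ _ (q ^+ (n1 * (4 * K * g)))).
  rewrite [X in _ <= X]exprM; apply: (@lerXn2r R (4 * K * g) (1/4) (q ^+ n1)); rewrite ?nnegrE //; lra.
apply: ler_wiXn2l => //; nia.
Qed.

End Real.
Section Prob.
Local Open Scope ring_scope.
Variables (R : realFieldType) (N g : nat) (b : R) (p : 'I_N -> 'I_N -> R).
Hypotheses (Hsym : forall i j, p i j = p j i)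
  (Hp1 : forall i j, i != j -> N%:R^-1 <= p i j)
  (Hp2 : forall i j, i != j -> p i j <= 1)
  (Hb : b / N%:R <= 1) (Hb0 : 0 <= b) (HN : (0 < N)%N).

Lemma up_neq u : u \in upper_pairs N -> u.1 != u.2.
Proof. rewrite inE => h; apply/negP => /eqP e; by rewrite e ltnn in h. Qed.

Lemma p_ge0 i j : i != j -> 0 <= p i j.
Proof. move=> h; apply: le_trans (Hp1 h); by rewrite invr_ge0 ler0n. Qed.

Lemma gp_ge0 E : 0 <= graph_prob p E.
Proof.
apply: prodr_ge0 => u /up_neq h; case: (u \in E); first exact: p_ge0.
by rewrite subr_ge0 Hp2.
Qed.

Lemma prod_if (I : finType) (U B : {set I}) (x : R) :
  \prod_(u in U) (if u \in B then x else 1) = x ^+ #|U :&: B|.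
Proof.
rewrite -big_mkcondr /= -prodr_const; apply: eq_bigl => u; by rewrite inE.
Qed.

Lemma card_touch (S : {set 'I_N}) : (#|touch S| <= 2 * #|S| * N)%N.
Proof.
have : touch S \subset setX S setT :|: setX setT S.
  apply/subsetP => u; rewrite !inE; by case/orP => ->; rewrite ?orbT.
move/subset_leq_card => h; apply: (leq_trans h); apply: leq_trans (leq_card_setU _ _) _.
by rewrite !cardsX cardsT card_ord [(N * _)%N]mulnC -mulnA mul2n -addnn.
Qed.

Lemma card_starA (S : {set 'I_N}) c v : c \in S -> v \notin S -> (#|starA S c v| <= #|S|)%N.
Proof.
move=> cS vS; apply: leq_trans (leq_imset_card _ _) _.
have := cardsD1 c (v |: S); rewrite !inE cS orbT /= cardsU1 vS.
by move=> h; rewrite leq_eqVlt -(eqn_add2l 1) -h add1n eqxx.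
Qed.

Lemma prod_lb (S : {set 'I_N}) c v : S \subset Vp b p -> #|S| = g -> c \in S -> v \notin S ->
  N%:R^-1 ^+ g * (1 - b / N%:R) ^+ (2 * g * N) <=
  \prod_(u in upper_pairs N) (if u \in touch S then
      (if u \in starA S c v then p u.1 u.2 else 1 - p u.1 u.2) else 1).
Proof.
move=> SV hS cS vS.
have sA : starA S c v \subset touch S :&: upper_pairs N by apply: starA_sub.
set A := starA S c v; set q := 1 - b / N%:R; set U := upper_pairs N.
have q0 : 0 <= q by rewrite /q subr_ge0.
have q1 : q <= 1.
  rewrite /q lerBlDr lerDl; apply: divr_ge0 => //; by apply: ler0n.
have i0 : 0 <= N%:R^-1 :> R by rewrite invr_ge0 ler0n.
have i1 : N%:R^-1 <= 1 :> R by rewrite invf_le1 ?ltr0n ?ler1n.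
apply: (@le_trans _ _ (\prod_(u in U) ((if u \in A then N%:R^-1 else 1) * (if u \in touch S then q else 1)))).
  rewrite big_split /= !prod_if; apply: ler_pM; rewrite ?exprn_ge0 //.
    apply: ler_wiXn2l => //; apply: leq_trans (subset_leq_card (subsetIr _ _)) _.
    by rewrite -hS card_starA.
  apply: ler_wiXn2l => //; apply: leq_trans (subset_leq_card (subsetIr _ _)) _.
  by rewrite -hS card_touch.
apply: ler_prod => u uU.
have hne := up_neq uU.
have pV : u \in touch S -> p u.1 u.2 <= b / N%:R.
  rewrite inE => /orP [] h.
    move/subsetP: SV => /(_ _ h); rewrite inE => /forallP /(_ u.2).
    by rewrite eq_sym hne /= => /ltW.
  move/subsetP: SV => /(_ _ h); rewrite inE => /forallP /(_ u.1).
  by rewrite hne /= Hsym => /ltW.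
case: (boolP (u \in A)) => uA.
  have uT : u \in touch S by move/subsetP: sA => /(_ u uA); rewrite inE => /andP [].
  rewrite uT mulr_ge0 //=; apply: le_trans (Hp1 hne); by rewrite -[X in _ <= X]mulr1 ler_wpM2l.
rewrite mul1r; case: (boolP (u \in touch S)) => uT; last by rewrite ler01 lexx.
rewrite q0 /= /q lerB //; exact: pV.
Qed.

End Prob.
Section Num.
Local Open Scope ring_scope.
Lemma final_num (R : realFieldType) (g N K M m : nat) (eta LB : R) :
  0 < eta -> (0 < g)%N -> 2 * g%:R / eta < M%:R -> (M + 2 * g <= N)%N ->
  eta * N%:R < m%:R -> N%:R^-1 ^+ g * (1/4) ^+ (4 * K * g) <= LB ->
  (eta / 2) ^+ g / (2 * (g`!)%:R) * (1/4) ^+ (4 * K * g) * N%:R <= (LB *+ (N - g)) *+ 'C(m, g).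
Proof.
move=> eta0 g0 hM hN hV hLB.
have N0 : (0 < N)%N by move: hN g0; clear; lia.
have N0r : 0 < N%:R :> R by rewrite ltr0n.
have gf0 : 0 < (g`!)%:R :> R by rewrite ltr0n fact_gt0.
have hMN : M%:R <= N%:R :> R by rewrite ler_nat; move: hN; clear; lia.
have hgN : 2 * g%:R < eta * N%:R.
  have h1 : 2 * g%:R < M%:R * eta by move: hM; rewrite ltr_pdivrMr.
  have h2 : M%:R * eta <= N%:R * eta by apply: ler_wpM2r; lra.
  lra.
have hEN : 0 <= eta * N%:R by apply: mulr_ge0; lra.
have hgm : g%:R + eta * N%:R / 2 <= m%:R by lra.
have gm : (g <= m)%N.
  rewrite -(ler_nat R); apply: le_trans hgm.
  have : 0 <= eta * N%:R by apply: mulr_ge0; lra.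
  lra.
have hC : (eta * N%:R / 2) ^+ g / (g`!)%:R <= ('C(m, g))%:R.
  rewrite ler_pdivrMr // -natrM bin_ffact.
  apply: (@le_trans _ _ (((m - g)%N)%:R ^+ g)); last by rewrite -natrX ler_nat ffact_lb.
  apply: (@lerXn2r R g); rewrite ?nnegrE ?ler0n //; first lra.
  rewrite natrB //; lra.
have hNg : N%:R / 2 <= ((N - g)%N)%:R :> R.
  have gN2 : (2 * g <= N)%N by move: hN; clear; lia.
  rewrite natrB; last by move: gN2; clear; lia.
  have : (2 * g <= N)%N by [].
  rewrite -(ler_nat R) natrM => h; lra.
have Q0 : 0 <= (1/4 : R) ^+ (4 * K * g) by apply: exprn_ge0; lra.
have eq1 : (eta / 2) ^+ g / (2 * (g`!)%:R) * (1/4) ^+ (4 * K * g) * N%:R =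
    ((eta * N%:R / 2) ^+ g / (g`!)%:R) *
    (N%:R / 2 * (N%:R^-1 ^+ g * (1/4) ^+ (4 * K * g))).
  have -> : eta * N%:R / 2 = eta / 2 * N%:R by rewrite mulrAC.
  rewrite [(eta / 2 * _) ^+ _]exprMn exprVn.
  have y0 : N%:R ^+ g != 0 :> R by rewrite expf_neq0 // gt_eqF.
  have f0 : (g`!)%:R != 0 :> R by rewrite gt_eqF.
  set y := N%:R ^+ g in y0 *; set F := (g`!)%:R in f0 *.
  set e := (eta / 2) ^+ g; set Q := (1/4 : R) ^+ (4 * K * g); set n := (N%:R : R).
  clearbody y F e Q n; field.
  by rewrite y0 f0.
rewrite eq1 -[(_ *+ 'C(m, g))]mulr_natr -[(LB *+ _)]mulr_natr.
rewrite [X in _ <= X]mulrC [LB * _]mulrC.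
have i0 : 0 <= N%:R^-1 :> R by rewrite invr_ge0; lra.
apply: ler_pM => //.
- apply: divr_ge0; last by apply: ler0n.
  apply: exprn_ge0; apply: mulr_ge0; [apply: mulr_ge0|]; lra.
- apply: mulr_ge0; first lra.
  apply: mulr_ge0 => //; exact: exprn_ge0.
apply: ler_pM => //; first lra.
apply: mulr_ge0 => //; exact: exprn_ge0.
Qed.
End Num.
Local Open Scope ring_scope.

Lemma card_evset N (E : {set 'I_N * 'I_N}) cf (S : {set 'I_N}) :
  #|evset E cf S| = (\sum_(v in ~: S) (E :&: touch S == starA S (cf S) v : nat))%N.
Proof.
rewrite -sum1_card big_mkcond [RHS]big_mkcond /=; apply: eq_bigr => v _.
by rewrite !inE; case: (v \in S); case: (_ == _).
Qed.

Theorem theorem3p4 (R : archiRealFieldType) (g : nat) (eps b eta : R) :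
  (0 < g)%N -> 0 < eps -> 0 < b -> 0 < eta ->
  exists c : R, exists N0 : nat, 0 < c /\
    forall (N : nat) (p : 'I_N -> 'I_N -> R),
      (N0 <= N)%N ->
      (forall i j, p i j = p j i) ->
      (forall i j, i != j -> (1 + eps) / N%:R < p i j) ->
      (forall i j, i != j -> p i j <= 1) ->
      eta * N%:R < (#|Vp b p|)%:R ->
      c * N%:R <= expected_dangling g p /\ expected_dangling g p <= N%:R.
Proof.
move=> g0 eps0 b0 eta0.
set K := Num.Def.archi_bound b.
have hK : b < K%:R by apply: archi_boundP; lra.
have K0 : (0 < K)%N by rewrite -(ltr0n R); lra.
set M := Num.Def.archi_bound (2 * g%:R / eta).
have hM : 2 * g%:R / eta < M%:R.
  apply: archi_boundP; apply: divr_ge0; last lra.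
  apply: mulr_ge0; [lra | exact: ler0n].
set c := (eta / 2) ^+ g / (2 * (g`!)%:R) * (1/4) ^+ (4 * K * g).
have gf0 : 0 < (g`!)%:R :> R by rewrite ltr0n fact_gt0.
exists c, (4 * K + 2 * g + M + 1)%N; split.
  rewrite /c; apply: mulr_gt0; last by apply: exprn_gt0; lra.
  apply: divr_gt0; [apply: exprn_gt0; lra | lra].
move=> N p hN Hsym Hp Hp1 hV.
have N0 : (0 < N)%N by move: hN; clear; lia.
have N0r : 0 < N%:R :> R by rewrite ltr0n.
have Hp' : forall i j, i != j -> N%:R^-1 <= p i j.
  move=> i j h; apply: le_trans (ltW (Hp i j h)).
  rewrite -[X in X <= _]mul1r; apply: ler_wpM2r; [by rewrite invr_ge0; lra | lra].
have hKN : K%:R <= N%:R :> R by rewrite ler_nat; move: hN K0; clear; lia.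
have Hb : b / N%:R <= 1 by rewrite ler_pdivrMr // mul1r; lra.
have Hb0 : 0 <= b by lra.
split; last first.
  have hsum : \sum_(E | is_graph E) graph_prob p E = 1.
    rewrite (eq_bigl (fun E => is_graph E && (E :&: set0 == set0))); last first.
      by move=> E; rewrite setI0 eqxx andbT.
    rewrite marg ?sub0set //; apply: big1 => u _; by rewrite in_set0.
  rewrite /expected_dangling.
  apply: (@le_trans _ _ (\sum_(E | is_graph E) graph_prob p E * N%:R)); last first.
    by rewrite -mulr_suml hsum mul1r.
  apply: ler_sum => E hE; apply: ler_wpM2l; first exact: (gp_ge0 Hp' Hp1).
  rewrite ler_nat; exact: count_le.
set x0 : 'I_N := Ordinal N0.
pose cf (S : {set 'I_N}) := odflt x0 [pick x in S].
have Hcf : forall S : {set 'I_N}, #|S| = g -> cf S \in S.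
  move=> S hS; rewrite /cf; case: pickP => [x //|h].
  by move: g0; rewrite -hS (eq_card0 h).
set V := Vp b p.
set q := 1 - b / N%:R.
set LB := N%:R^-1 ^+ g * q ^+ (2 * g * N).
have stepA : \sum_(S in kS g V) \sum_(v in ~: S)
    \prod_(u in upper_pairs N) (if u \in touch S then
      (if u \in starA S (cf S) v then p u.1 u.2 else 1 - p u.1 u.2) else 1)
    <= expected_dangling g p.
  rewrite /expected_dangling.
  apply: (@le_trans _ _ (\sum_(E | is_graph E) graph_prob p E *
      (\sum_(S in kS g V) #|evset E cf S|)%N%:R)); last first.
    apply: ler_sum => E hE; apply: ler_wpM2l; first exact: (gp_ge0 Hp' Hp1).
    rewrite ler_nat; exact: sum_ev.
  have eE : forall E, graph_prob p E * (\sum_(S in kS g V) #|evset E cf S|)%N%:R =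
      \sum_(S in kS g V) \sum_(v in ~: S)
        graph_prob p E * (E :&: touch S == starA S (cf S) v : nat)%:R.
    move=> E; rewrite natr_sum mulr_sumr; apply: eq_bigr => S _.
    by rewrite card_evset natr_sum mulr_sumr.
  rewrite (eq_bigr _ (fun E _ => eE E)).
  rewrite exchange_big /=; apply: ler_sum => S hSk.
  have hS : #|S| = g by move: hSk; rewrite inE => /andP [_ /eqP].
  rewrite exchange_big /=; apply: ler_sum => v _.
  rewrite -(marg p (starA_sub v (Hcf S hS))) big_mkcondr /=.
  apply: ler_sum => E _; case: (_ == _); by rewrite ?mulr1 ?mulr0.
have stepC : (LB *+ (N - g)) *+ #|kS g V| <= \sum_(S in kS g V) \sum_(v in ~: S)
    \prod_(u in upper_pairs N) (if u \in touch S then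
      (if u \in starA S (cf S) v then p u.1 u.2 else 1 - p u.1 u.2) else 1).
  rewrite -sumr_const; apply: ler_sum => S hSk.
  move: (hSk); rewrite inE => /andP [SV /eqP hS].
  have hc : #|~: S| = (N - g)%N by rewrite -hS cardsCs setCK card_ord.
  rewrite -hc -sumr_const; apply: ler_sum => v; rewrite inE => vS.
  exact: (prod_lb Hsym Hp' Hb Hb0 N0 SV hS (Hcf S hS) vS).
apply: le_trans (le_trans stepC stepA).
rewrite cards_draws /c.
apply: (@final_num R g N K M #|V| eta LB) => //.
- by move: hN; clear; lia.
- apply: ler_wpM2l; first by apply: exprn_ge0; rewrite invr_ge0; lra.
  apply: pow_block => //; first exact: ltW.
  by move: hN; clear; lia.
Qed.
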